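(* \[ \sum_{n=1}^\infty\frac{p(n)}{n^3(3n-2)^2(3n-1)^2(2n-1)\binom{5n}{3n}^2\binom{2n}{n}}=3\pi^2, \] where $p(n)=574277n^6-1347180n^5+1274841n^4-621294n^3+164024n^2-22184n+1200$. *)

(* Defs.v *)
From Stdlib Require Import Reals.
From Coquelicot Require Import Coquelicot.
Open Scope R_scope.

Definition p15 (n : R) : R :=
  574277 * n ^ 6 - 1347180 * n ^ 5 + 1274841 * n ^ 4 - 621294 * n ^ 3
  + 164024 * n ^ 2 - 22184 * n + 1200.

(* The n-th summand, n >= 1. Binomial.C is the real binomial coefficient. *)
Definition term15 (n : nat) : R :=
  let x := INR n in
  p15 x / (x ^ 3 * (3 * x - 2) ^ 2 * (3 * x - 1) ^ 2 * (2 * x - 1)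
           * (Binomial.C (5 * n) (3 * n)) ^ 2 * Binomial.C (2 * n) n).

(* Main.v *)
Require Import Defs.
From Stdlib Require Import Reals Lra Lia Factorial.
From Coquelicot Require Import Coquelicot.
Open Scope R_scope.
Definition fr (n : nat) : R := INR (fact n).
Lemma fr_pos n : 0 < fr n.
Proof. unfold fr. apply lt_0_INR. apply lt_O_fact. Qed.
Lemma frS n : fr (S n) = (INR n + 1) * fr n.
Proof. unfold fr. change (fact (S n)) with (S n * fact n)%nat. rewrite mult_INR, S_INR. ring. Qed.
Ltac inrn := repeat rewrite ?frS, ?S_INR, ?plus_INR, ?mult_INR, ?INR_0, ?INR_1.
Ltac posR := repeat match goal with
 | |- 0 < _ * _ => apply Rmult_lt_0_compat
 | |- 0 < _ / _ => apply Rdiv_lt_0_compat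
 | |- 0 < / _ => apply Rinv_0_lt_compat
 | |- 0 < fr _ => apply fr_pos end.
Definition Nn (n : nat) : R := fr (3*n) * fr (2*n) * fr n * fr (4*n) / fr (5*n).
Definition Ft (n k : nat) : R := fr k * fr (k + 2*n) / (fr (k + 3*n + 1) * fr (k + 4*n + 1)) * Nn n.
Lemma Ft_pos n k : 0 < Ft n k.
Proof. unfold Ft, Nn. posR. Qed.
Definition rk x y := (y+1)*(y+2*x+1)/((y+3*x+2)*(y+4*x+2)).
Lemma FtSk n k : Ft n (S k) = Ft n k * rk (INR n) (INR k).
Proof.
  unfold Ft, rk.
  replace (S k + 2*n)%nat with (S (k + 2*n)) by lia.
  replace (S k + 3*n + 1)%nat with (S (k + 3*n + 1)) by lia.
  replace (S k + 4*n + 1)%nat with (S (k + 4*n + 1)) by lia.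
  rewrite !frS. pose proof (pos_INR n). pose proof (pos_INR k).
  pose proof (fr_pos k). pose proof (fr_pos (k+2*n)). pose proof (fr_pos (k+3*n+1)). pose proof (fr_pos (k+4*n+1)).
  unfold Nn. pose proof (fr_pos (5*n)).
  inrn. field. repeat split; lra.
Qed.
Definition Wp (x y : R) : R := ((28392 + 439444 * x ^ 1 + 2950680 * x ^ 2 + 11304060 * x ^ 3 + 27274956 * x ^ 4 + 43044672 * x ^ 5 + 44486820 * x ^ 6 + 29065040 * x ^ 7 + 10903152 * x ^ 8 + 1790784 * x ^ 9) + (69748 + 947146 * x ^ 1 + 5509279 * x ^ 2 + 17953901 * x ^ 3 + 35896633 * x ^ 4 + 45138209 * x ^ 5 + 34893756 * x ^ 6 + 15174784 * x ^ 7 + 2844624 * x ^ 8) * y ^ 1 + (71836 + 845409 * x ^ 1 + 4182806 * x ^ 2 + 11291179 * x ^ 3 + 17977879 * x ^ 4 + 16898806 * x ^ 5 + 8690129 * x ^ 6 + 1887436 * x ^ 7) * y ^ 2 + (39080 + 392825 * x ^ 1 + 1614655 * x ^ 2 + 3478510 * x ^ 3 + 4147085 * x ^ 4 + 2596710 * x ^ 5 + 667735 * x ^ 6) * y ^ 3 + (11780 + 99265 * x ^ 1 + 327735 * x ^ 2 + 531215 * x ^ 3 + 423430 * x ^ 4 + 132975 * x ^ 5) * y ^ 4 + (1860 + 12805 * x ^ 1 + 32180 * x ^ 2 + 35150 * x ^ 3 + 14125 * x ^ 4) * y ^ 5 + (120 + 650 * x ^ 1 + 1125 * x ^ 2 +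 625 * x ^ 3) * y ^ 6) / 5.
Definition rn x y := (y+2*x+1)*(y+2*x+2)*((3*x+1)*(3*x+2)*(3*x+3)*(2*x+1)*(2*x+2)*(x+1)*(4*x+1)*(4*x+2)*(4*x+3)*(4*x+4))
  / ((5*x+1)*(5*x+2)*(5*x+3)*(5*x+4)*(5*x+5)*((y+3*x+2)*(y+3*x+3)*(y+3*x+4)*(y+4*x+2)*(y+4*x+3)*(y+4*x+4)*(y+4*x+5))).
Definition Rf x y := Wp x y / ((5*x+1)*(5*x+2)*(5*x+3)*(5*x+4)*((y+3*x+2)*(y+3*x+3)*(y+4*x+2)*(y+4*x+3)*(y+4*x+4))).
Lemma FtSn n k : Ft (S n) k = Ft n k * rn (INR n) (INR k).
Proof.
  unfold Ft, Nn, rn.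
  replace (k + 2*S n)%nat with (S (S (k + 2*n))) by lia.
  replace (k + 3*S n + 1)%nat with (S (S (S (k + 3*n + 1)))) by lia.
  replace (k + 4*S n + 1)%nat with (S (S (S (S (k + 4*n + 1))))) by lia.
  replace (3*S n)%nat with (S (S (S (3*n)))) by lia.
  replace (2*S n)%nat with (S (S (2*n))) by lia.
  replace (4*S n)%nat with (S (S (S (S (4*n))))) by lia.
  replace (5*S n)%nat with (S (S (S (S (S (5*n)))))) by lia.
  rewrite !frS. pose proof (pos_INR n). pose proof (pos_INR k).
  pose proof (fr_pos k). pose proof (fr_pos (k+2*n)). pose proof (fr_pos (k+3*n+1)). pose proof (fr_pos (k+4*n+1)).
  pose proof (fr_pos (5*n)). pose proof (fr_pos (4*n)). pose proof (fr_pos (3*n)). pose proof (fr_pos (2*n)). pose proof (fr_pos n).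
  inrn. field. repeat split; lra.
Qed.
Lemma wz_rat x y : 0 <= x -> 0 <= y -> rn x y - 1 = rk x y * Rf x (y+1) - Rf x y.
Proof. intros hx hy. unfold rn, rk, Rf, Wp. field. repeat split; lra. Qed.
Definition Gt (n k : nat) : R := Ft n k * Rf (INR n) (INR k).
Lemma WZ n k : Ft (S n) k - Ft n k = Gt n (S k) - Gt n k.
Proof.
  unfold Gt. rewrite FtSn, FtSk, S_INR.
  pose proof (pos_INR n). pose proof (pos_INR k).
  pose proof (wz_rat (INR n) (INR k) ltac:(lra) ltac:(lra)).
  transitivity (Ft n k * (rn (INR n) (INR k) - 1)). ring.
  rewrite H1. ring.
Qed.
Fixpoint sm (f : nat -> R) (n : nat) : R := match n with O => 0 | S m => sm f m + f m end.
Lemma sm_ext f g N : (forall n, (n < N)%nat -> f n = g n) -> sm f N = sm g N.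
Proof. induction N; intros H; simpl; auto. rewrite IHN by (intros; apply H; lia). rewrite H by lia. ring. Qed.
Lemma sm_minus f g N : sm (fun n => f n - g n) N = sm f N - sm g N.
Proof. induction N; simpl; [ring|rewrite IHN; ring]. Qed.
Lemma sm_scal c f N : sm (fun n => c * f n) N = c * sm f N.
Proof. induction N; simpl; [ring|rewrite IHN; ring]. Qed.
Lemma sm_le f g N : (forall n, (n < N)%nat -> f n <= g n) -> sm f N <= sm g N.
Proof. induction N; intros H; simpl. lra. assert (f N <= g N) by (apply H; lia).
  assert (sm f N <= sm g N) by (apply IHN; intros; apply H; lia). lra. Qed.
Lemma tele g M : sm (fun k => g (S k) - g k) M = g M - g O.
Proof. induction M; simpl; [ring|rewrite IHM; ring]. Qed.
Lemma markov1 (F G : nat -> nat -> R)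
  (wz : forall n k, F (S n) k - F n k = G n (S k) - G n k) N :
  sm (fun n => F n n + G n (S n)) N = sm (F O) N + sm (fun n => G n N) N.
Proof.
  induction N. simpl. ring.
  simpl. rewrite IHN.
  assert (E : sm (fun n => G n (S N)) N - sm (fun n => G n N) N = F N N - F O N).
  { rewrite <- sm_minus. rewrite <- (tele (fun n => F n N)).
    apply sm_ext. intros n _. rewrite wz. reflexivity. }
  lra.
Qed.
Lemma markov0 (F G : nat -> nat -> R)
  (wz : forall n k, F (S n) k - F n k = G n (S k) - G n k) N M :
  sm (F O) M = sm (fun n => G n O) N + sm (F N) M - sm (fun n => G n M) N.
Proof.
  induction N. simpl. ring.
  simpl. rewrite IHN.
  assert (E : sm (F (S N)) M - sm (F N) M = G N M - G N O).
  { rewrite <- sm_minus. rewrite <- (tele (G N)).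
    apply sm_ext. intros k _. apply wz. }
  lra.
Qed.
Lemma sm_geom q N : sm (fun n => q ^ n) N * (1 - q) = 1 - q ^ N.
Proof. induction N; simpl; [ring|]. rewrite Rmult_plus_distr_r, IHN. ring. Qed.
Lemma div_le a b c : 0 < c -> a <= b * c -> a / c <= b.
Proof. intros. unfold Rdiv. apply Rmult_le_reg_r with c; auto. rewrite Rmult_assoc, Rinv_l by lra. lra. Qed.
Ltac pp := unfold Rdiv; repeat (apply Rplus_le_le_0_compat || apply Rmult_le_pos || apply pow_le
   || (apply Rlt_le; apply Rinv_0_lt_compat)); try lra.
Definition Dp (x y : R) : R := 6168 * x ^ 0 * y ^ 0 + 31052 * x ^ 0 * y ^ 1 + 44324 * x ^ 0 * y ^ 2 + 29320 * x ^ 0 * y ^ 3 + 10060 * x ^ 0 * y ^ 4 + 1740 * x ^ 0 * y ^ 5 + 120 * x ^ 0 * y ^ 6 + 156716 * x ^ 1 * y ^ 0 + 695654 * x ^ 1 * y ^ 1 + 919711 * x ^ 1 * y ^ 2 + 566395 * x ^ 1 * y ^ 3 + 180795 * x ^ 1 * y ^ 4 + 29015 * x ^ 1 * y ^ 5 + 1850 * x ^ 1 * y ^ 6 + 1402920 * x ^ 2 * y ^ 0 + 5681361 * x ^ 2 * y ^ 1 + 6800214 * x ^ 2 * y ^ 2 + 3738535 * x ^ 2 * y ^ 3 + 1046975 * x ^ 2 * y ^ 4 + 144070 * x ^ 2 * y ^ 5 + 7625 * x ^ 2 * y ^ 6 + 6541140 * x ^ 3 * y ^ 0 + 24321279 *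 x ^ 3 * y ^ 1 + 25777951 * x ^ 3 * y ^ 2 + 12204390 * x ^ 3 * y ^ 3 + 2845035 * x ^ 3 * y ^ 4 + 309850 * x ^ 3 * y ^ 5 + 11875 * x ^ 3 * y ^ 6 + 18266484 * x ^ 4 * y ^ 0 + 62298147 * x ^ 4 * y ^ 1 + 56886711 * x ^ 4 * y ^ 2 + 22186665 * x ^ 4 * y ^ 3 + 4011570 * x ^ 4 * y ^ 4 + 304625 * x ^ 4 * y ^ 5 + 6250 * x ^ 4 * y ^ 6 + 32333568 * x ^ 5 * y ^ 0 + 100722531 * x ^ 5 * y ^ 1 + 76239944 * x ^ 5 * y ^ 2 + 22928290 * x ^ 5 * y ^ 3 + 2848275 * x ^ 5 * y ^ 4 + 112500 * x ^ 5 * y ^ 5 + 36693180 * x ^ 6 * y ^ 0 + 103738744 * x ^ 6 * y ^ 1 + 61243621 * x ^ 6 * y ^ 2 + 12619765 * x ^ 6 * y ^ 3 + 806250 * x ^ 6 * y ^ 4 + 25924960 * x ^ 7 * y ^ 0 + 65965216 * x ^ 7 * y ^ 1 + 27137564 * x ^ 7 * y ^ 2 + 2875000 * x ^ 7 * y ^ 3 + 10396848 * x ^ 8 * y ^ 0 + 23555376 * x ^ 8 * y ^ 1 + 5100000 * x ^ 8 * y ^ 2 + 1809216 * x ^ 9 * y ^ 0 + 3600000 * x ^ 9 * y ^ 1.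
Lemma Wp_nonneg x y : 0 <= x -> 0 <= y -> 0 <= Wp x y.
Proof. intros. unfold Wp. pp. Qed.
Lemma Rf_nonneg x y : 0 <= x -> 0 <= y -> 0 <= Rf x y.
Proof. intros. unfold Rf. unfold Rdiv. apply Rmult_le_pos. apply Wp_nonneg; auto. apply Rlt_le, Rinv_0_lt_compat.
  repeat apply Rmult_lt_0_compat; lra. Qed.
Lemma Rf_le x y : 0 <= x -> 0 <= y -> Rf x y <= 2 * (y + 1).
Proof. intros. unfold Rf. apply div_le. repeat apply Rmult_lt_0_compat; lra.
  assert (0 <= Dp x y) by (unfold Dp; pp).
  assert (E : 2 * (y + 1) * ((5*x+1)*(5*x+2)*(5*x+3)*(5*x+4)*((y+3*x+2)*(y+3*x+3)*(y+4*x+2)*(y+4*x+3)*(y+4*x+4))) - Wp x y = Dp x y / 5)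
    by (unfold Dp, Wp; field).
  lra. Qed.
Ltac pos0 := repeat apply Rmult_le_pos; lra.
Ltac prodle := match goal with
  | |- ?a * ?b <= ?c * ?d => apply Rmult_le_compat; [pos0|pos0|prodle|prodle]
  | _ => lra end.
Lemma rn_le x y : 0 <= x -> 0 <= y -> rn x y <= / 4.
Proof. intros. unfold rn. apply div_le. repeat apply Rmult_lt_0_compat; lra.
  assert (H1 : (3*x+1)*(3*x+2)*(3*x+3)*(4*x+1)*(4*x+2)*(y+2*x+1)*(y+2*x+2)*(2*x+1)*(2*x+2)*(4*x+4)*(4*x+3)*(4*x+4)
    <= (5*x+1)*(5*x+2)*(5*x+3)*(5*x+4)*(5*x+5)*(y+3*x+2)*(y+3*x+3)*(y+3*x+4)*(y+4*x+2)*(y+4*x+4)*(y+4*x+3)*(y+4*x+5)) by prodle.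
  nra. Qed.
Lemma Ft0 k : Ft 0 k = / (INR k + 1) ^ 2.
Proof. unfold Ft, Nn. replace (k + 2*0)%nat with k by lia. replace (k + 3*0 + 1)%nat with (S k) by lia.
  replace (k + 4*0 + 1)%nat with (S k) by lia. simpl (3*0)%nat. simpl (2*0)%nat. simpl (4*0)%nat. simpl (5*0)%nat.
  rewrite frS. replace (fr 0) with 1 by (unfold fr; simpl; lra). pose proof (fr_pos k). pose proof (pos_INR k). field. lra. Qed.
Lemma Ft_le n k : Ft n k <= (/ 4) ^ n * Ft 0 k.
Proof. induction n. simpl. lra. rewrite FtSn. simpl.
  pose proof (rn_le (INR n) (INR k) (pos_INR n) (pos_INR k)). pose proof (Ft_pos n k).
  assert (Ft n k * rn (INR n) (INR k) <= Ft n k * / 4) by (apply Rmult_le_compat_l; lra).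
  assert (0 <= Ft 0 k) by (apply Rlt_le, Ft_pos). nra. Qed.
Lemma Gt_bound n N : 0 <= Gt n N <= 2 * (/4) ^ n / (INR N + 1).
Proof. unfold Gt. pose proof (Rf_nonneg (INR n) (INR N) (pos_INR n) (pos_INR N)).
  pose proof (Rf_le (INR n) (INR N) (pos_INR n) (pos_INR N)). pose proof (Ft_pos n N).
  pose proof (Ft_le n N). rewrite Ft0 in H2. pose proof (pos_INR N). split. nra.
  apply Rle_trans with ((/ 4) ^ n * / (INR N + 1) ^ 2 * (2 * (INR N + 1))).
  apply Rmult_le_compat; lra.
  right. field. lra. Qed.
Definition F2 (n k : nat) : R := fr n ^ 4 * fr k ^ 2 / (fr (2*n) * fr (n + k + 1) ^ 2).
Definition G2 (n k : nat) : R := F2 n k * (2 * INR k + 3 * INR n + 3) / (2 * (2 * INR n + 1)).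
Lemma F2_pos n k : 0 < F2 n k.
Proof. unfold F2. apply Rdiv_lt_0_compat. apply Rmult_lt_0_compat; apply pow_lt, fr_pos.
  apply Rmult_lt_0_compat. apply fr_pos. apply pow_lt, fr_pos. Qed.
Lemma F2Sn n k : F2 (S n) k = F2 n k * ((INR n+1)^4/((2*INR n+1)*(2*INR n+2)*(INR n+INR k+2)^2)).
Proof. unfold F2.
  replace (S n + k + 1)%nat with (S (n + k + 1)) by lia.
  replace (2 * S n)%nat with (S (S (2*n))) by lia.
  rewrite !frS. pose proof (pos_INR n). pose proof (pos_INR k).
  pose proof (fr_pos k). pose proof (fr_pos n). pose proof (fr_pos (2*n)). pose proof (fr_pos (n+k+1)).
  inrn. field. repeat split; lra. Qed.
Lemma F2Sk n k : F2 n (S k) = F2 n k * ((INR k+1)^2/(INR n+INR k+2)^2).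
Proof. unfold F2.
  replace (n + S k + 1)%nat with (S (n + k + 1)) by lia.
  rewrite !frS. pose proof (pos_INR n). pose proof (pos_INR k).
  pose proof (fr_pos k). pose proof (fr_pos n). pose proof (fr_pos (2*n)). pose proof (fr_pos (n+k+1)).
  inrn. field. repeat split; lra. Qed.
Lemma WZ2 n k : F2 (S n) k - F2 n k = G2 n (S k) - G2 n k.
Proof. unfold G2. rewrite F2Sn, F2Sk, S_INR. pose proof (pos_INR n). pose proof (pos_INR k).
  field. repeat split; lra. Qed.
Lemma F20 k : F2 0 k = / (INR k + 1) ^ 2.
Proof. unfold F2. replace (0 + k + 1)%nat with (S k) by lia. simpl (2*0)%nat.
  rewrite frS. replace (fr 0) with 1 by (unfold fr; simpl; lra). pose proof (fr_pos k). pose proof (pos_INR k). field. lra. Qed.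
Lemma F2_le_n n k : F2 n k <= (/ 2) ^ n * F2 0 k.
Proof. induction n. simpl. lra. rewrite F2Sn. change ((/2)^S n) with (/2 * (/2)^n).
  pose proof (pos_INR n) as hx. pose proof (pos_INR k) as hy. pose proof (F2_pos n k).
  assert (Hr : (INR n+1)^4/((2*INR n+1)*(2*INR n+2)*(INR n+INR k+2)^2) <= / 2).
  { apply div_le. { repeat apply Rmult_lt_0_compat; try lra; apply pow_lt; lra. }
    assert ((INR n+1)*(2*INR n+2)*(INR n+1)*(INR n+1) <= (2*INR n+1)*(2*INR n+2)*(INR n+INR k+2)*(INR n+INR k+2)) by prodle.
    lra. }
  assert (F2 n k * ((INR n+1)^4/((2*INR n+1)*(2*INR n+2)*(INR n+INR k+2)^2)) <= F2 n k * / 2) by (apply Rmult_le_compat_l; lra).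
  assert (0 <= F2 0 k) by (apply Rlt_le, F2_pos). lra. Qed.
Lemma G2_bound n N : (n < N)%nat -> 0 <= G2 n N <= 3 * (/2) ^ n / (INR N + 1).
Proof. intros hn. unfold G2. pose proof (F2_le_n n N). rewrite F20 in H.
  pose proof (F2_pos n N). pose proof (pos_INR n). pose proof (pos_INR N).
  assert (INR n <= INR N) by (apply le_INR; lia).
  assert (0 < (/2)^n) by (apply pow_lt; lra).
  split. apply Rmult_le_pos. apply Rmult_le_pos; lra. apply Rlt_le, Rinv_0_lt_compat; lra.
  apply div_le. lra.
  apply Rle_trans with ((/ 2) ^ n * / (INR N + 1) ^ 2 * (6 * (INR N + 1))).
  apply Rmult_le_compat; lra.
  apply Rle_trans with (6 * ((/ 2) ^ n / (INR N + 1))). right. field. lra.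
  apply Rle_trans with (6 * ((/ 2) ^ n / (INR N + 1)) * (2 * INR n + 1)).
  assert (0 <= (/ 2) ^ n / (INR N + 1)). { apply Rmult_le_pos. lra. apply Rlt_le, Rinv_0_lt_compat; lra. }
  nra. right. field. lra. Qed.
Lemma fr_sq n : fr n ^ 2 <= fr (2*n).
Proof. induction n. simpl. unfold fr. simpl. lra.
  replace (2 * S n)%nat with (S (S (2*n))) by lia. rewrite !frS. rewrite S_INR, mult_INR.
  replace (INR 2) with 2 by (simpl; lra).
  pose proof (pos_INR n). pose proof (fr_pos n).
  assert (0 <= fr n ^ 2) by (apply pow_le; lra).
  assert ((INR n + 1)^2 <= (2 * INR n + 1 + 1) * (2 * INR n + 1)) by nra.
  apply Rle_trans with ((INR n + 1)^2 * fr (2*n)).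
  { replace (((INR n + 1) * fr n) ^ 2) with ((INR n + 1)^2 * fr n ^ 2) by ring.
    apply Rmult_le_compat_l. apply pow_le; lra. auto. }
  replace ((2 * INR n + 1 + 1) * ((2 * INR n + 1) * fr (2 * n))) with ((2 * INR n + 1 + 1) * (2 * INR n + 1) * fr (2 * n)) by ring.
  apply Rmult_le_compat_r. apply Rlt_le, fr_pos. auto. Qed.
Lemma F2_le_k N k : F2 N k <= / (INR N + 1) ^ 2.
Proof. pose proof (pos_INR N) as hN. induction k.
  - unfold F2. replace (N + 0 + 1)%nat with (S N) by lia. rewrite frS. pose proof (fr_sq N).
    pose proof (fr_pos N). pose proof (fr_pos (2*N)). replace (fr 0) with 1 by (unfold fr; simpl; lra).
    apply div_le. apply Rmult_lt_0_compat. lra. apply pow_lt. nra.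
    apply Rle_trans with (fr N ^ 2 * fr N ^ 2). right; ring.
    apply Rle_trans with (fr (2*N) * fr N ^ 2). apply Rmult_le_compat_r. apply pow_le; lra. auto.
    right. field. lra.
  - rewrite F2Sk. pose proof (pos_INR k). pose proof (F2_pos N k).
    assert ((INR k+1)^2/(INR N+INR k+2)^2 <= 1). { apply div_le. apply pow_lt; lra. nra. }
    assert (F2 N k * ((INR k + 1) ^ 2 / (INR N + INR k + 2) ^ 2) <= F2 N k * 1) by (apply Rmult_le_compat_l; lra).
    lra. Qed.
Fixpoint asq (n : nat) : R := match n with
  | O => 0 | S O => 0
  | S (S m) => (INR m ^ 2 * asq m + match m with O => 2 | _ => 0 end) / ((INR m + 2) * (INR m + 1)) end.
Lemma asq_SS m : asq (S (S m)) = (INR m ^ 2 * asq m + match m with O => 2 | _ => 0 end) / ((INR m + 2) * (INR m + 1)).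
Proof. reflexivity. Qed.
Lemma asq_bound n : 0 <= asq n <= 1 /\ 0 <= asq (S n) <= 1.
Proof. induction n. simpl. lra. split. tauto. destruct IHn as [IH1 IH2].
  rewrite asq_SS. pose proof (pos_INR n). destruct n.
  - simpl. lra.
  - assert (1 <= INR (S n)) by (rewrite S_INR; pose proof (pos_INR n); lra).
    split. apply Rmult_le_pos. replace (0:R) with (INR (S n) ^ 2 * 0 + 0) at 1 by ring. nra.
    apply Rlt_le, Rinv_0_lt_compat. nra.
    apply div_le. nra. nra. Qed.
Lemma asq_radius : Rbar_le 1 (CV_radius asq).
Proof. destruct (CV_radius_bounded asq) as [Hub _]. apply Hub. exists 1. intros n.
  rewrite pow1, Rmult_1_r. destruct (asq_bound n) as [[h1 h2] _]. rewrite Rabs_pos_eq; lra. Qed.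
Lemma in_rad a x : Rbar_le 1 (CV_radius a) -> Rabs x < 1 -> Rbar_lt (Rabs x) (CV_radius a).
Proof. intros H hx. eapply Rbar_lt_le_trans. 2: exact H. simpl. exact hx. Qed.
Definition d1 := PS_derive asq.
Definition d2 := PS_derive d1.
Lemma rad1 : Rbar_le 1 (CV_radius d1). Proof. unfold d1. rewrite CV_radius_derive. apply asq_radius. Qed.
Lemma rad2 : Rbar_le 1 (CV_radius d2). Proof. unfold d2. rewrite CV_radius_derive. apply rad1. Qed.
Definition ecoef (n : nat) : R := match n with O => 2 | _ => 0 end.
Lemma coef_id n : PS_minus (PS_minus d2 (PS_incr_n d2 2)) (PS_incr_1 d1) n = ecoef n.
Proof. unfold PS_minus, d2, d1, PS_derive. destruct n as [|[|m]].
  - simpl. unfold minus, plus, opp, zero; simpl. field.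
  - simpl. unfold minus, plus, opp, zero; simpl. field.
  - cbn [PS_incr_n PS_incr_1]. rewrite (asq_SS (S (S m))). remember (asq (S (S m))) as A.
    rewrite !S_INR. unfold minus, plus, opp; simpl. pose proof (pos_INR m). field. lra.
Qed.
Lemma ode x : Rabs x < 1 -> (1 - x ^ 2) * PSeries d2 x - x * PSeries d1 x = 2.
Proof. intros hx.
  assert (e2 : ex_pseries d2 x) by (apply CV_radius_inside, in_rad; [apply rad2|auto]).
  assert (e1 : ex_pseries d1 x) by (apply CV_radius_inside, in_rad; [apply rad1|auto]).
  assert (E : PSeries (PS_minus (PS_minus d2 (PS_incr_n d2 2)) (PS_incr_1 d1)) x = (1 - x ^ 2) * PSeries d2 x - x * PSeries d1 x).
  { rewrite PSeries_minus, PSeries_minus, PSeries_incr_n, PSeries_incr_1. ring.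
    auto. apply ex_pseries_incr_n; auto. apply ex_pseries_minus. auto. apply ex_pseries_incr_n; auto.
    apply ex_pseries_incr_1; auto. }
  rewrite <- E. rewrite (PSeries_ext _ ecoef) by apply coef_id.
  assert (ee : ex_pseries ecoef x).
  { apply ex_pseries_ext with (PS_minus (PS_minus d2 (PS_incr_n d2 2)) (PS_incr_1 d1)). apply coef_id.
    apply ex_pseries_minus. apply ex_pseries_minus. auto. apply ex_pseries_incr_n; auto. apply ex_pseries_incr_1; auto. }
  rewrite PSeries_decr_1 by auto. rewrite (PSeries_ext _ (fun _ => 0)) by (intros; reflexivity).
  rewrite PSeries_const_0. simpl. ring. Qed.
Lemma sin_small t : -1 < t < 1 -> Rabs (sin t) < 1.
Proof. intros Ht. pose proof PI_RGT_0. pose proof PI_4. pose proof (PI2_3_2).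
  destruct (Rtotal_order t 0) as [h|[h|h]].
  - pose proof (sin_gt_x t h). assert (sin t < 0) by (apply sin_lt_0_var; lra).
    rewrite Rabs_left; lra.
  - subst. rewrite sin_0, Rabs_R0. lra.
  - pose proof (sin_lt_x t h). assert (0 < sin t) by (apply sin_gt_0; lra).
    rewrite Rabs_pos_eq; lra. Qed.
Lemma comp_sin (f : R -> R) (df : R) t : is_derive f (sin t) df -> is_derive (fun u => f (sin u)) t (df * cos t).
Proof. intros H. replace (df * cos t) with (scal (cos t) df).
  apply (is_derive_comp f sin t df (cos t) H (is_derive_sin t)).
  unfold scal; simpl; unfold mult; simpl. ring. Qed.
Lemma der0 t : -1 < t < 1 -> is_derive (fun u => PSeries asq (sin u)) t (PSeries d1 (sin t) * cos t).
Proof. intros Ht. apply comp_sin. unfold d1. apply is_derive_PSeries. apply in_rad. apply asq_radius. apply sin_small; auto. Qed.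
Lemma der1 t : -1 < t < 1 -> is_derive (fun u => PSeries d1 (sin u)) t (PSeries d2 (sin t) * cos t).
Proof. intros Ht. apply comp_sin. unfold d2. apply is_derive_PSeries. apply in_rad. apply rad1. apply sin_small; auto. Qed.
Lemma const0 (h : R -> R) : (forall t, -1 < t < 1 -> is_derive h t 0) -> forall t, -1 < t < 1 -> h t = h 0.
Proof. intros Hd t Ht.
  assert (Hin : forall x, Rmin 0 t <= x <= Rmax 0 t -> -1 < x < 1).
  { intros x Hx. unfold Rmin, Rmax in Hx. destruct (Rle_dec 0 t); lra. }
  destruct (MVT_gen h 0 t (fun _ => 0)) as [c [_ Hc]].
  - intros x Hx. apply Hd, Hin. lra.
  - intros x Hx. apply continuity_pt_filterlim. apply (@ex_derive_continuous R_AbsRing R_NormedModule). exists 0. apply Hd, Hin. auto.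
  - lra. Qed.
Lemma h1_der t : -1 < t < 1 -> is_derive (fun u => PSeries d1 (sin u) * cos u - 2 * u) t 0.
Proof. intros Ht.
  assert (H : is_derive (fun u => minus (mult (PSeries d1 (sin u)) (cos u)) (2 * u)) t
     (minus (plus (mult (PSeries d2 (sin t) * cos t) (cos t)) (mult (PSeries d1 (sin t)) (- sin t))) (2 * 1))).
  { apply (@is_derive_minus R_AbsRing R_NormedModule). apply (@is_derive_mult R_AbsRing (fun u => PSeries d1 (sin u)) cos). apply der1; auto. apply is_derive_cos.
    intros; unfold mult; simpl; ring.
    apply is_derive_scal. apply (@is_derive_id R_AbsRing). }
  replace 0 with (minus (plus (mult (PSeries d2 (sin t) * cos t) (cos t)) (mult (PSeries d1 (sin t)) (- sin t))) (2 * 1)).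
  eapply is_derive_ext. 2: exact H. intros u. unfold minus, plus, opp, mult; simpl. ring.
  unfold minus, plus, opp, mult; simpl.
  pose proof (ode (sin t) (sin_small t Ht)). pose proof (sin2_cos2 t). unfold Rsqr in H1.
  replace (PSeries d2 (sin t) * cos t * cos t) with (PSeries d2 (sin t) * (cos t * cos t)) by ring.
  replace (cos t * cos t) with (1 - sin t * sin t) by lra. simpl in H0. lra. Qed.
Lemma h1_val t : -1 < t < 1 -> PSeries d1 (sin t) * cos t = 2 * t.
Proof. intros Ht. pose proof (const0 _ h1_der t Ht) as H. cbv beta in H.
  rewrite sin_0, cos_0, PSeries_0 in H. assert (E : d1 0 = 0) by (unfold d1, PS_derive; simpl; ring).
  rewrite E in H. lra. Qed.
Lemma h0_val t : -1 < t < 1 -> PSeries asq (sin t) = t ^ 2.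
Proof. intros Ht.
  assert (Hd : forall u, -1 < u < 1 -> is_derive (fun u => PSeries asq (sin u) - u ^ 2) u 0).
  { intros u Hu. replace 0 with (minus (PSeries d1 (sin u) * cos u) (2 * u)).
    assert (H : is_derive (fun v => minus (PSeries asq (sin v)) (v^2)) u (minus (PSeries d1 (sin u) * cos u) (2*u))).
    { apply (@is_derive_minus R_AbsRing R_NormedModule). apply der0; auto. auto_derive; auto; ring. }
    eapply is_derive_ext. 2: exact H. intros v. unfold minus, plus, opp; simpl. ring.
    unfold minus, plus, opp; simpl. rewrite h1_val by auto. ring. }
  pose proof (const0 _ Hd t Ht) as H. cbv beta in H. rewrite sin_0, PSeries_0 in H. replace (asq 0) with 0 in H by reflexivity. lra. Qed.
Lemma asq_half : PSeries asq (1/2) = (PI / 6) ^ 2.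
Proof. rewrite <- sin_PI6. apply h0_val. pose proof PI_RGT_0. pose proof PI_4. lra. Qed.
Definition T (n : nat) : R := Ft n n + Gt n (S n).
Lemma term_T n : term15 (S n) = 18 * T n.
Proof.
  unfold T, Gt. rewrite FtSk.
  unfold term15, Binomial.C, Ft, Nn, rk, Rf, p15, Wp. cbv zeta.
  change (INR (fact (5 * S n))) with (fr (5 * S n)).
  change (INR (fact (3 * S n))) with (fr (3 * S n)).
  change (INR (fact (2 * S n))) with (fr (2 * S n)).
  change (INR (fact (S n))) with (fr (S n)).
  replace (5 * S n - 3 * S n)%nat with (S (S (2*n))) by lia.
  replace (2 * S n - S n)%nat with (S n) by lia.
  change (INR (fact (S (S (2*n))))) with (fr (S (S (2*n)))).
  replace (5*S n)%nat with (S (S (S (S (S (5*n)))))) by lia.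
  replace (3*S n)%nat with (S (S (S (3*n)))) by lia.
  replace (2*S n)%nat with (S (S (2*n))) by lia.
  replace (n + 2*n)%nat with (3*n)%nat by lia.
  replace (n + 3*n + 1)%nat with (S (4*n)) by lia.
  replace (n + 4*n + 1)%nat with (S (5*n)) by lia.
  change (INR (fact (S n))) with (fr (S n)).
  rewrite !frS. pose proof (pos_INR n).
  pose proof (fr_pos (5*n)). pose proof (fr_pos (4*n)). pose proof (fr_pos (3*n)). pose proof (fr_pos (2*n)). pose proof (fr_pos n).
  inrn. field. repeat split; try lra.
Qed.
Lemma lim_inv : is_lim_seq (fun N => / (INR N + 1)) 0.
Proof. assert (H : is_lim_seq (fun N => INR N + 1) p_infty).
  { apply is_lim_seq_ext with (fun N => INR (S N)). intros; apply S_INR.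
    apply (is_lim_seq_incr_1 INR p_infty). apply is_lim_seq_INR. }
  apply (is_lim_seq_inv _ _ H). discriminate. Qed.
Lemma lim_err (e : nat -> R) C : (forall N, 0 <= e N <= C / (INR N + 1)) -> is_lim_seq e 0.
Proof. intros H. apply is_lim_seq_le_le with (fun _ => 0) (fun N => C * / (INR N + 1)).
  intros N. apply H. apply is_lim_seq_const.
  replace (Finite 0) with (Rbar_mult C 0) by (simpl; f_equal; ring).
  apply is_lim_seq_scal_l. apply lim_inv. Qed.
Lemma sm_pos f N : (forall n, (n < N)%nat -> 0 <= f n) -> 0 <= sm f N.
Proof. intros H. apply Rle_trans with (sm (fun _ => 0) N). right. induction N; simpl. auto.
  rewrite <- IHN. ring. intros; apply H; lia. apply sm_le. auto. Qed.
Lemma geom_bound q N : 0 <= q < 1 -> sm (fun n => q ^ n) N <= / (1 - q).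
Proof. intros Hq. pose proof (sm_geom q N). assert (0 <= q ^ N) by (apply pow_le; lra).
  apply Rmult_le_reg_r with (1 - q). lra. rewrite H, Rinv_l by lra. lra. Qed.
Lemma err1 N : 0 <= sm (F2 N) N <= 1 / (INR N + 1).
Proof. pose proof (pos_INR N). split. apply sm_pos. intros; apply Rlt_le, F2_pos.
  apply Rle_trans with (sm (fun _ => / (INR N + 1) ^ 2) N). apply sm_le. intros; apply F2_le_k.
  assert (E : forall M, sm (fun _ : nat => / (INR N + 1) ^ 2) M = INR M / (INR N + 1) ^ 2).
  { induction M; cbn [sm]. simpl. field. lra. rewrite IHM, S_INR. field. lra. }
  rewrite E. apply div_le. apply pow_lt; lra. apply Rle_trans with (1 * (INR N + 1) / (INR N + 1) * (INR N + 1)).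
  field_simplify; lra. right. field. lra. Qed.
Lemma err2 N : 0 <= sm (fun n => G2 n N) N <= 6 / (INR N + 1).
Proof. pose proof (pos_INR N). split. apply sm_pos. intros; apply G2_bound; auto.
  apply Rle_trans with (sm (fun n => 3 / (INR N + 1) * (/ 2) ^ n) N). apply sm_le.
  intros n hn. destruct (G2_bound n N hn). apply Rle_trans with (1 := H1). right. field. lra.
  rewrite sm_scal. pose proof (geom_bound (/2) N ltac:(lra)).
  apply Rle_trans with (3 / (INR N + 1) * / (1 - / 2)). apply Rmult_le_compat_l. apply Rmult_le_pos. lra.
  apply Rlt_le, Rinv_0_lt_compat; lra. auto. right. field. lra. Qed.
Lemma err3 N : 0 <= sm (fun n => Gt n N) N <= 8 / 3 / (INR N + 1).
Proof. pose proof (pos_INR N). split. apply sm_pos. intros; apply Gt_bound.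
  apply Rle_trans with (sm (fun n => 2 / (INR N + 1) * (/ 4) ^ n) N). apply sm_le.
  intros n hn. destruct (Gt_bound n N). apply Rle_trans with (1 := H1). right. field. lra.
  rewrite sm_scal. pose proof (geom_bound (/4) N ltac:(lra)).
  apply Rle_trans with (2 / (INR N + 1) * / (1 - / 4)). apply Rmult_le_compat_l. apply Rmult_le_pos. lra.
  apply Rlt_le, Rinv_0_lt_compat; lra. auto. right. field. lra. Qed.
Lemma asq_odd m : asq (2*m+1) = 0.
Proof. induction m. reflexivity. replace (2 * S m + 1)%nat with (S (S (2*m+1))) by lia.
  rewrite asq_SS, IHm. replace (match (2 * m + 1)%nat with O => 2 | S _ => 0 end) with 0.
  field. pose proof (pos_INR (2*m+1)). lra. replace (2*m+1)%nat with (S (2*m)) by lia. reflexivity. Qed.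
Lemma asq_even m : asq (2*m+2) = 2 ^ (2*m+1) * fr m ^ 2 / fr (2*m+2).
Proof. induction m. simpl. unfold fr. simpl. field.
  replace (2 * S m + 2)%nat with (S (S (2*m+2))) by lia.
  rewrite asq_SS, IHm. replace (match (2 * m + 2)%nat with O => 2 | S _ => 0 end) with 0
   by (replace (2*m+2)%nat with (S (2*m+1)) by lia; reflexivity).
  replace (2 * S m + 1)%nat with (S (S (2*m+1))) by lia. rewrite <- !tech_pow_Rmult.
  rewrite !frS. pose proof (pos_INR m). pose proof (fr_pos m). pose proof (fr_pos (2*m+2)).
  rewrite !plus_INR, !mult_INR. replace (INR 2) with 2 by (simpl; lra). simpl (INR 1).
  assert (0 < 2 ^ (2*m+1)) by (apply pow_lt; lra). rewrite S_INR, plus_INR, mult_INR. replace (INR 2) with 2 by (simpl; lra).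
  set (P := 2 ^ (2*m+1)) in *. field. repeat split; lra. Qed.
Lemma G2_asq n : G2 n 0 = 6 * (asq (2*n+2) * (1/2) ^ (2*n+2)).
Proof. rewrite asq_even. unfold G2, F2. replace (n + 0 + 1)%nat with (S n) by lia.
  replace (1/2) with (/2) by field. rewrite pow_inv.
  replace (2*n+2)%nat with (S (2*n+1)) by lia. rewrite <- (tech_pow_Rmult 2 (2*n+1)).
  replace (S (2*n+1)) with (S (S (2*n))) by lia.
  rewrite !frS. replace (fr 0) with 1 by (unfold fr; simpl; lra).
  pose proof (pos_INR n). pose proof (fr_pos n). pose proof (fr_pos (2*n)).
  assert (0 < 2 ^ (2*n+1)) by (apply pow_lt; lra). set (P := 2 ^ (2*n+1)) in *.
  rewrite !S_INR, !mult_INR. replace (INR 2) with 2 by (simpl; lra). simpl (INR 0).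
  field. repeat split; lra. Qed.
Lemma sm_even N : sm (fun j => asq j * (1/2) ^ j) (2*N+2) = sm (fun n => asq (2*n+2) * (1/2) ^ (2*n+2)) N.
Proof. induction N. simpl. replace (asq 0) with 0 by reflexivity. replace (asq 1) with 0 by reflexivity. ring.
  replace (2 * S N + 2)%nat with (S (S (2*N+2))) by lia. cbn [sm]. rewrite IHN.
  replace (S (2*N+2)) with (2*(N+1)+1)%nat by lia. rewrite asq_odd.
  replace (2*N+2)%nat with (2*N+2)%nat by lia. ring. Qed.
Lemma scal_pow (a : nat -> R) x k : scal (pow_n x k) (a k) = a k * x ^ k.
Proof. rewrite pow_n_pow. unfold scal; simpl; unfold mult; simpl. ring. Qed.
Lemma ps_conv (a : nat -> R) x l : is_pseries a x l -> is_series (fun k => a k * x ^ k) l.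
Proof. intros H. eapply is_series_ext. 2: exact H. intros k. apply scal_pow. Qed.
Lemma sum_sm (a : nat -> R) N : sum_n a N = sm a (S N).
Proof. induction N. rewrite sum_O. simpl. ring. rewrite sum_Sn, IHN. cbn [sm]. unfold plus; simpl. ring. Qed.
Lemma lim_A : is_lim_seq (fun N => sm (fun n => G2 n 0) N) (PI ^ 2 / 6).
Proof.
  assert (Hs : is_pseries asq (1/2) (PSeries asq (1/2))).
  { apply PSeries_correct, CV_radius_inside, in_rad. apply asq_radius. rewrite Rabs_pos_eq; lra. }
  rewrite asq_half in Hs.
  assert (Hl : is_lim_seq (fun N => sm (fun j => asq j * (1/2) ^ j) (S N)) ((PI/6)^2)).
  { apply ps_conv in Hs. apply is_lim_seq_ext with (sum_n (fun j => asq j * (1/2) ^ j)).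
    intros N. apply sum_sm. exact Hs. }
  pose proof (is_lim_seq_subseq _ _ (fun N => (2*N+1)%nat) ltac:(apply eventually_subseq; intros; lia) Hl) as H2.
  cbv beta in H2.
  apply is_lim_seq_ext with (fun N => 6 * sm (fun j => asq j * (1/2) ^ j) (S (2*N+1))).
  intros N. replace (S (2*N+1)) with (2*N+2)%nat by lia. rewrite sm_even, <- sm_scal.
  apply sm_ext. intros; symmetry; apply G2_asq.
  replace (Finite (PI ^ 2 / 6)) with (Rbar_mult 6 ((PI/6)^2)). apply is_lim_seq_scal_l. exact H2.
  simpl. f_equal. field. Qed.
Lemma lim_Z : is_lim_seq (fun N => sm (F2 0) N) (PI ^ 2 / 6).
Proof.
  apply is_lim_seq_ext with (fun N => sm (fun n => G2 n 0) N + (sm (F2 N) N - sm (fun n => G2 n N) N)).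
  intros N. rewrite (markov0 F2 G2 WZ2 N N). ring.
  replace (PI ^ 2 / 6) with (PI ^ 2 / 6 + (0 - 0)) by ring.
  apply is_lim_seq_plus'. apply lim_A. apply is_lim_seq_minus'.
  apply lim_err with 1. apply err1. apply lim_err with 6. apply err2. Qed.
Lemma lim_T : is_lim_seq (fun N => sm T N) (PI ^ 2 / 6).
Proof.
  apply is_lim_seq_ext with (fun N => sm (F2 0) N + sm (fun n => Gt n N) N).
  intros N. unfold T. rewrite (markov1 Ft Gt WZ N). f_equal. apply sm_ext. intros. rewrite Ft0, F20. auto.
  replace (PI ^ 2 / 6) with (PI ^ 2 / 6 + 0) by ring.
  apply is_lim_seq_plus'. apply lim_Z. apply lim_err with (8/3). apply err3. Qed.
Theorem mainTheorem15 :
  is_series (fun k : nat => term15 (S k)) (3 * PI ^ 2).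
Proof.
  assert (H : is_lim_seq (fun N => sm (fun k => term15 (S k)) (S N)) (3 * PI ^ 2)).
  { apply (is_lim_seq_incr_1 (fun N => sm (fun k => term15 (S k)) N)).
    apply is_lim_seq_ext with (fun N => 18 * sm T N).
    intros N. rewrite <- sm_scal. apply sm_ext. intros; symmetry; apply term_T.
    replace (Finite (3 * PI ^ 2)) with (Rbar_mult 18 (PI ^ 2 / 6)) by (simpl; f_equal; field).
    apply is_lim_seq_scal_l. apply lim_T. }
  unfold is_series.
  assert (E : forall N, sum_n (fun k => term15 (S k)) N = sm (fun k => term15 (S k)) (S N)) by (intros; apply sum_sm).
  apply (is_lim_seq_ext _ _ _ (fun N => eq_sym (E N))) in H. exact H.
Qed.
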